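(* Let $P$ be a convex polytope in $\mathbb{R}^D$ with vertices in $\mathbb{Z}^D$. Let $r>0$, and fix a set $F_r \subset B_r(nP)$. Let $A$ be chosen uniformly at random from all subsets $S\subset L(nP)$ such that $S\cap B_r(nP) = F_r$, and let $\mathbf{k}\in M_r(nP+nP)$. Then, for some constant $c > 0$ independent of $n$, $$\mathbb{P}[\mathbf{k} \notin A+A]\ \le\ c \left( \tfrac34 \right)^{ \left| L (nP \cap (\mathbf{k} - nP)) \right|/2}.$$
   Context: For $S \subset \mathbb{R}^D$, $L(S) = S\cap \mathbb{Z}^D$, and $nS$ is the dilation of $S$ by $n$ about the origin; $\mathbf{k}-nP = \{\mathbf{k}-\mathbf{x}:\mathbf{x}\in nP\}$. For a convex polytope $Q$ and $r>0$, $B_r(Q) = \{\mathbf{q}\in L(Q) : d(\mathbf{q},\mathbf{v})\le r \text{ for some vertex } \mathbf{v} \text{ of } Q\}$, with $d$ the Euclidean metric, and $M_r(Q) = L(Q)\setminus B_r(Q)$. For a set $A$, $A+A=\{a_1+a_2: a_1,a_2\in A\}$. *)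

(* Defs.v *)
From HB Require Import structures.
From mathcomp Require Import all_boot all_order all_algebra.
From mathcomp Require Import finmap.
From mathcomp Require Import boolp classical_sets reals exp.
Set Implicit Arguments. Unset Strict Implicit. Unset Printing Implicit Defensive.
Import Order.TTheory GRing.Theory Num.Theory.
Local Open Scope ring_scope.
Local Open Scope classical_set_scope.

Section Defs.
Variables (R : realType) (D : nat).
Notation vec := 'rV[R]_D.

Definition zr (z : 'rV[int]_D) : vec := map_mx (fun a : int => a%:~R) z.

Definition conv (m : nat) (V : 'I_m -> vec) : set vec :=
  [set x | exists lam : 'I_m -> R, (forall i, 0 <= lam i) /\
     \sum_i lam i = 1 /\ x = \sum_i lam i *: V i].

Definition is_vertex (Q : set vec) (v : vec) : Prop :=
  Q v /\ forall x y (t : R), Q x -> Q y -> 0 < t < 1 ->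
    v = t *: x + (1 - t) *: y -> x = y.

Definition dil (n : nat) (S : set vec) : set vec := [set n%:R *: x | x in S].

Definition msum (S T : set vec) : set vec :=
  [set z | exists x y, S x /\ T y /\ z = x + y].

Definition refl (k : vec) (S : set vec) : set vec := [set k - x | x in S].

Definition dist (x y : vec) : R := Num.sqrt (\sum_i (x ord0 i - y ord0 i) ^+ 2).

Definition near_vertex (r : R) (Q : set vec) (q : vec) : Prop :=
  exists v, is_vertex Q v /\ dist q v <= r.

(* M_r(Q) membership for an integer point k:  k in L(Q) \ B_r(Q) *)
Definition in_M (r : R) (Q : set vec) (k : 'rV[int]_D) : Prop :=
  Q (zr k) /\ ~ near_vertex r Q (zr k).

(* B_r(Q) as a finite set, given the finite set LQ = L(Q) *)
Definition Bset (r : R) (Q : set vec) (LQ : {fset 'rV[int]_D}) : {fset 'rV[int]_D} :=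
  [fset z in LQ | `[< near_vertex r Q (zr z) >]]%fset.

Definition in_sumset (S : {fset 'rV[int]_D}) (k : 'rV[int]_D) : bool :=
  [exists a : S, exists b : S, (val a + val b == k)%R].

End Defs.

Arguments zr {R D} z.
Arguments conv {R D m} V.
Arguments is_vertex {R D} Q v.
Arguments dil {R D} n S.
Arguments msum {R D} S T.
Arguments refl {R D} k S.
Arguments dist {R D} x y.
Arguments near_vertex {R D} r Q q.
Arguments in_M {R D} r Q k.
Arguments Bset {R D} r Q LQ.
Arguments in_sumset {D} S k.

(* Main.v *)
Require Import Defs.
From HB Require Import structures.
From mathcomp Require Import all_boot all_order all_algebra.
From mathcomp Require Import finmap.
From mathcomp Require Import boolp classical_sets reals exp.
From mathcomp Require Import zify ring lra.
Import Order.TTheory GRing.Theory Num.Theory.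
Local Open Scope ring_scope.
From mathcomp Require Import zify ring lra.
Section PartA.
Variable T : finType.

Definition Cset (s : T -> T) (H : {set T}) : {set {ffun T -> bool}} :=
  [set g : {ffun T -> bool} | [forall h in H, ~~ (g h && g (s h))]].

Lemma count_pairs (s : T -> T) (H : {set T}) :
  (forall h, h \in H -> s h \notin H) ->
  {in H &, injective s} ->
  (#|Cset s H| * 4 ^ #|H| <= 3 ^ #|H| * 2 ^ #|T|)%N.
Proof.
move Hn: #|H| => n; elim: n H Hn => [|n IH] H Hn sH injH.
  rewrite !expn0 mul1n muln1.
  apply: leq_trans (max_card _) _.
  by rewrite card_ffun card_bool.
have : (0 < #|H|)%N by rewrite Hn.
rewrite card_gt0 => /set0Pn [a aH].
set H' := H :\ a.
have cH' : #|H'| = n by move: (cardsD1 a H); rewrite aH Hn /= add1n => -[].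
have sH' : forall h, h \in H' -> s h \notin H'.
  move=> h; rewrite !inE => /andP [_ hH]; by rewrite negb_and (sH h hH) orbT.
have injH' : {in H' &, injective s}.
  by move=> x y; rewrite !inE => /andP [_ xH] /andP [_ yH]; apply: injH.
have IHn := IH H' cH' sH' injH'.
set b := s a.
have bH : b \notin H by exact: sH.
have ab : a != b by apply: contraNneq bH => <-.
set C' := Cset s H'.
set C := Cset s H.
set X := [set g : {ffun T -> bool} | g a].
set Y := [set g : {ffun T -> bool} | g b].
set up := fun g : {ffun T -> bool} => [ffun x => if (x == a) || (x == b) then true else g x].
have upC : forall g, g \in C' -> up g \in C'.
  move=> g; rewrite !inE => /forallP Hg; apply/forallP => h; apply/implyP => hH.
  have := Hg h; rewrite hH /= !ffunE.
  move: hH; rewrite !inE => /andP [ha hH].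
  have hb : (h == b) = false by apply/negP => /eqP hb; move: bH; rewrite -hb hH.
  have sha : (s h == a) = false.
    by apply/negP => /eqP sha; move: (sH h hH); rewrite sha aH.
  have shb : (s h == b) = false.
    apply/negP => /eqP shb; move: (injH h a hH aH shb) => /eqP; by rewrite (negbTE ha).
  by rewrite (negbTE ha) hb sha shb.
have upinj : forall E : {set {ffun T -> bool}}, {subset E <= C'} ->
   (forall g g', g \in E -> g' \in E -> (g a = g' a) /\ (g b = g' b)) ->
   (#|E| <= #|C' :&: X :&: Y|)%N.
  move=> E EC Eab.
  have inj : {in E &, injective up}.
    move=> g g' gE g'E eqg; apply/ffunP => x.
    have := congr1 (fun f : {ffun T -> bool} => f x) eqg; rewrite /= !ffunE.
    have [ea eb] := Eab g g' gE g'E.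
    case: (eqVneq x a) => [->|xa] //; case: (eqVneq x b) => [->|xb] //.
  rewrite -(card_in_imset inj). apply: subset_leq_card. apply/fintype.subsetP => f.
  case/imsetP => g gE ->; by rewrite !finset.in_setI upC ?EC // !inE !ffunE !eqxx orbT.
have Hsplit : forall g : {ffun T -> bool}, g \in C = (g \in C') && ~~ (g a && g b).
  move=> g; rewrite /C /C' /Cset !inE.
  apply/forallP/andP => [Hg|[/forallP Hg gab] h].
    split; last by move: (Hg a); rewrite aH.
    by apply/forallP => h; apply/implyP; rewrite !inE => /andP [_ hH]; move: (Hg h); rewrite hH.
  apply/implyP => hH.
  case: (eqVneq h a) => [->|ha]; first by [].
  by move: (Hg h); rewrite !inE ha hH.
have eqA : C :&: X = (C' :&: X) :\: Y.
  apply/setP => g; rewrite finset.in_setI Hsplit.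
  rewrite finset.in_setD finset.in_setI; move: (g \in C') => c; rewrite !inE.
  by case: (g a); case: (g b); case: c.
have eqB : C :\: X = C' :\: X.
  apply/setP => g; rewrite finset.in_setD Hsplit !inE.
  by case: (g a); case: (g b); case: [forall h in H', _].
have e1 : #|C| = (#|(C' :&: X) :\: Y| + (#|(C' :\: X) :&: Y| + #|(C' :\: X) :\: Y|))%N.
  by rewrite -(cardsID X C) eqA eqB cardsID.
have e2 : #|C'| = (#|C' :&: X :&: Y| + #|(C' :&: X) :\: Y| + (#|(C' :\: X) :&: Y| + #|(C' :\: X) :\: Y|))%N.
  by rewrite !cardsID.
have b1 : (#|(C' :&: X) :\: Y| <= #|C' :&: X :&: Y|)%N.
  apply: upinj.
    by move=> g /finset.setDP [/finset.setIP [gC _] _].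
  move=> g g' /finset.setDP [/finset.setIP [_ gX] gY] /finset.setDP [/finset.setIP [_ g'X] g'Y].
  move: gX gY g'X g'Y; rewrite !inE => -> /negbTE -> -> /negbTE ->; done.
have b2 : (#|(C' :\: X) :&: Y| <= #|C' :&: X :&: Y|)%N.
  apply: upinj.
    by move=> g /finset.setIP [/finset.setDP [gC _] _].
  move=> g g' /finset.setIP [/finset.setDP [_ gX] gY] /finset.setIP [/finset.setDP [_ g'X] g'Y].
  move: gX gY g'X g'Y; rewrite !inE => /negbTE -> -> /negbTE -> ->; done.
have b3 : (#|(C' :\: X) :\: Y| <= #|C' :&: X :&: Y|)%N.
  apply: upinj.
    by move=> g /finset.setDP [/finset.setDP [gC _] _].
  move=> g g' /finset.setDP [/finset.setDP [_ gX] gY] /finset.setDP [/finset.setDP [_ g'X] g'Y].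
  move: gX gY g'X g'Y; rewrite !inE => /negbTE -> /negbTE -> /negbTE -> /negbTE ->; done.
have key : (#|C| * 4 <= 3 * #|C'|)%N by rewrite e1 e2; lia.
apply: (@leq_trans (3 * #|C'| * 4^n)).
  by rewrite expnS mulnA leq_mul2r key orbT.
by rewrite expnS -mulnA -mulnA leq_mul2l IHn orbT.
Qed.
End PartA.
Lemma sum_delta (R : realType) D m (j : 'I_m) (f : 'I_m -> 'rV[R]_D) :
  \sum_(i < m) (if i == j then f i else 0) = f j.
Proof. by rewrite -big_mkcond big_pred1_eq. Qed.

Lemma vertex_dil (R : realType) D m (V : 'I_m -> 'rV[R]_D) n v :
  is_vertex (dil n (conv V)) v -> exists i, v = n%:R *: V i.
Proof.
case=> -[x [lam [lam0 [lam1 ->]]] <-] vert.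
have [j lj] : exists j, 0 < lam j.
  case: (pselect (exists j, 0 < lam j)) => // H; exfalso.
  have : \sum_i lam i = 0.
    apply: big1 => i _; apply/eqP; rewrite eq_le lam0 andbT leNgt.
    by apply/negP => h; apply: H; exists i.
  by rewrite lam1 => /eqP; rewrite oner_eq0.
have lj1 : lam j <= 1.
  rewrite -lam1 (bigD1 j) //= lerDl; exact: sumr_ge0.
set t := lam j / 2.
have t0 : 0 < t by rewrite divr_gt0.
have t1 : t < 1 by rewrite /t ltr_pdivrMr // mul1r (le_lt_trans lj1) // ltr1n.
have t1' : 1 - t != 0 by rewrite subr_eq0 eq_sym lt_eqF.
set mu := fun i => (lam i - (if i == j then t else 0)) / (1 - t).
set y := n%:R *: \sum_i mu i *: V i.
have yin : dil n (conv V) y.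
  exists (\sum_i mu i *: V i) => //; exists mu; split; [|split] => //.
    move=> i; rewrite /mu divr_ge0 ?subr_ge0 ?(ltW t1) //.
    case: eqP => [->|_]; last exact: lam0.
    by rewrite /t ler_pdivrMr // ler_pMr // ler1n.
  rewrite /mu -mulr_suml sumrB lam1.
  have -> : \sum_(i < m) (if i == j then t else 0) = t.
    by rewrite -big_mkcond big_pred1_eq.
  by rewrite divff.
have Wjin : dil n (conv V) (n%:R *: V j).
  exists (V j) => //; exists (fun i => if i == j then 1 else 0); split; [|split].
  - by move=> i; case: eqP.
  - by rewrite -big_mkcond big_pred1_eq.
  - rewrite (eq_bigr (fun i => if i == j then V i else 0)); first by rewrite sum_delta.
    by move=> i _; case: eqP => _; rewrite ?scale1r ?scale0r.
have eqv : n%:R *: \sum_i lam i *: V i = t *: (n%:R *: V j) + (1 - t) *: y.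
  have e1 : (1 - t) *: y = n%:R *: (\sum_i lam i *: V i - t *: V j).
    rewrite /y scalerA mulrC -scalerA scaler_sumr; congr (_ *: _).
    rewrite (eq_bigr (fun i => lam i *: V i - (if i == j then t *: V i else 0))).
      by rewrite sumrB sum_delta.
    move=> i _; rewrite scalerA /mu mulrC divfK // scalerBl.
    by case: eqP => _; rewrite ?scale0r.
  by rewrite e1 scalerBr !scalerA [t * _]mulrC addrC subrK.
exists j.
have := vert _ _ t Wjin yin; rewrite t0 t1 => /(_ isT eqv) eWy.
by rewrite eqv -eWy -scalerDl addrC subrK scale1r.
Qed.
Lemma dist_coord (R : realType) D (x y : 'rV[R]_D) r j :
  dist x y <= r -> `|x ord0 j - y ord0 j| <= r.
Proof.
move=> h; apply: le_trans h; rewrite /dist -sqrtr_sqr ler_sqrt; last first.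
  by apply: sumr_ge0 => i _; exact: sqr_ge0.
rewrite (bigD1 j) //= lerDl; apply: sumr_ge0 => i _; exact: sqr_ge0.
Qed.

Lemma Bset_bound (R : realType) D m (V : 'I_m -> 'rV[R]_D) (r : R) :
  exists K : nat, forall n (L : {fset 'rV[int]_D}),
    (#|` Bset r (dil n (conv V)) L| <= K)%N.
Proof.
pose R0 := (Num.trunc r).+1.
have rR0 : r < R0%:R by exact: truncnS_gt.
pose T := ('I_m * {ffun 'I_D -> 'I_(R0 + R0).+1})%type.
exists #|{: T}| => n L.
pose dec (p : T) : 'rV[int]_D :=
  \row_j (Num.floor ((n%:R *: V p.1) ord0 j) + (p.2 j : nat)%:Z - R0%:Z).
pose A := [fset x in [set: T]]%fset.
apply: (@leq_trans #|` (dec @` A)%fset|).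
  apply: fsubset_leq_card; apply/fsubsetP => z.
  rewrite /Bset !inE => /andP [_ /asboolP [v [/vertex_dil [i ->] dv]]].
  have hc := fun j => @dist_coord _ _ _ _ _ j dv.
  pose o := [ffun j => inord (absz (z ord0 j - Num.floor ((n%:R *: V i) ord0 j) + R0%:Z)%R) : 'I_(R0 + R0).+1].
  have -> : z = dec (i, o).
    apply/rowP => j; rewrite !mxE ffunE /=.
    set w := n%:R * V i ord0 j.
    have hw : (n%:R *: V i) ord0 j = w by rewrite mxE.
    rewrite hw.
    have hj := hc j; rewrite hw !mxE ler_norml in hj.
    case/andP: hj => hj1 hj2.
    set fl := Num.floor w.
    have /andP [hf1 hf2] := floor_itv w.
    rewrite -/fl in hf1 hf2.
    have e1 : (1%:~R : R) = 1 by [].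
    rewrite rmorphD /= e1 in hf2.
    have rR0' : r < (R0%:Z)%:~R :> R := rR0.
    have u1 : (z ord0 j - fl)%:~R < (R0%:Z + 1)%:~R :> R.
      rewrite !rmorphD !rmorphN /= -/fl.
      rewrite e1; lra.
    have u2 : (- R0%:Z)%:~R < (z ord0 j - fl)%:~R :> R.
      rewrite !rmorphD !rmorphN /= -/fl; lra.
    rewrite ltr_int in u1; rewrite ltr_int in u2.
    move: u1 u2; clearbody fl; move: (z ord0 j) => a u1 u2.
    rewrite inordK; last by lia.
    rewrite gez0_abs; last by lia.
    lia.
  apply: in_imfset => /=. by rewrite /A in_fset inE.
apply: leq_trans (leq_imfset_card _ _ _) _.
have -> : size (enum_finmem (mem A)) = #|` A| by [].
by rewrite card_finset cardsT.
Qed.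

Lemma in_sepfset (K : choiceType) (A : {fset K}) (P : pred K) x :
  (x \in [fset y in A | P y]%fset) = (x \in A) && P x.
Proof. by rewrite !inE. Qed.

Lemma zrB (R : realType) D (a b : 'rV[int]_D) : zr (a - b) = zr a - zr b :> 'rV[R]_D.
Proof. by apply/matrixP => i j; rewrite !mxE rmorphB. Qed.

Lemma fix_card (K : choiceType) (A : {fset K}) :
  (forall x y, x \in A -> y \in A -> x = y) -> (#|` A| <= 1)%N.
Proof.
case: (fset_0Vmem A) => [->|[x xA]] h; first by rewrite cardfs0.
rewrite -(cardfs1 x); apply: fsubset_leq_card; apply/fsubsetP => y yA.
by rewrite inE (h y x yA xA).
Qed.

Theorem lemma9 (R : realType) (D : nat) (P : set 'rV[R]_D)
  (m : nat) (V : 'I_m -> 'rV[R]_D) (hP : P = conv V)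
  (hvert : forall v, is_vertex P v -> exists z : 'rV[int]_D, v = zr z)
  (r : R) (hr : 0 < r) :
  exists2 c : R, 0 < c &
  forall (n : nat) (LnP : {fset 'rV[int]_D}),
    (forall z, z \in LnP <-> dil n P (zr z)) ->
  forall F : {fset 'rV[int]_D}, (F `<=` Bset r (dil n P) LnP)%fset ->
  forall k : 'rV[int]_D, in_M r (msum (dil n P) (dil n P)) k ->
  let good := [fset S in fpowerset LnP | (S `&` Bset r (dil n P) LnP == F)%fset]%fset in
  let bad := [fset S in good | ~~ in_sumset S k]%fset in
  let N := #|` [fset z in LnP | `[< refl (zr k) (dil n P) (zr z) >]]%fset |%fset in
  (#|` bad |%fset%:R / #|` good |%fset%:R : R) <= c * powR (3 / 4) (N%:R / 2).
Proof.
subst P.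
have [K hK] := @Bset_bound R D m V r.
exists ((4/3)^+(K.+1)); first by apply: exprn_gt0; lra.
move=> n LnP hL F hF k _; cbv zeta.
set B := Bset r (dil n (conv V)) LnP.
set good := [fset S in fpowerset LnP | _]%fset.
set bad := [fset S in good | _]%fset.
set Q := [fset z in LnP | _]%fset.

have hB : (#|` B| <= K)%N := hK n LnP.
have BL : (B `<=` LnP)%fset by apply/fsubsetP => z; rewrite /B /Bset inE => /andP [].
set U0 := (LnP `\` B)%fset.
pose sig (u : U0) : U0 := insubd u (k - val u).
have sigE : forall u : U0, k - val u \in U0 -> val (sig u) = k - val u.
  by move=> u h; rewrite /sig insubdK.
have kk : forall z : 'rV[int]_D, k - (k - z) = z by move=> z; rewrite opprB addrC subrK.
pose H := [set u : U0 | (k - val u \in U0) && (val u != k - val u) &&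
            (choice.pickle (val u) < choice.pickle (k - val u)%R)%N].
have hinH : forall u : U0, u \in H -> k - val u \in U0.
  by move=> u; rewrite inE => /andP [/andP [] ].
have count := @count_pairs _ sig H.
have {count} count : (#|Cset _ sig H| * 4 ^ #|H| <= 3 ^ #|H| * 2 ^ #|{: U0}|)%N.
  apply: count.
    move=> h hH; have hk := hinH h hH.
    move: hH; rewrite !inE sigE // kk => /andP [_ hlt].
    by rewrite ltnNge (ltnW hlt) andbF.
  move=> x y xH yH e; apply: val_inj.
  have := congr1 val e; rewrite !sigE ?hinH // => e'.
  by apply: oppr_inj; apply: (addrI k).
have goodP : forall S, S \in good -> (S `<=` LnP)%fset /\ (S `&` B = F)%fset.
  by move=> S; rewrite /good in_sepfset fpowersetE => /andP [? /eqP].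
have badgood : forall S, S \in bad -> S \in good by move=> S; rewrite /bad in_sepfset => /andP [].
pose phi (S : {fset 'rV[int]_D}) : {ffun U0 -> bool} := [ffun u => val u \in S].
have phi_inj : {in good &, injective phi}.
  move=> S1 S2 /goodP [s1 e1] /goodP [s2 e2] ep; apply/fsetP => z.
  case: (boolP (z \in LnP)) => zL; last first.
    apply/idP/idP => h; exfalso; move: zL; rewrite ?(fsubsetP s1 z h) ?(fsubsetP s2 z h) //.
  case: (boolP (z \in B)) => zB.
    have : (z \in (S1 `&` B)%fset) = (z \in (S2 `&` B)%fset) by rewrite e1 e2.
    rewrite !in_fsetI zB !andbT. done.
  have zU : z \in U0 by rewrite inE zB zL.
  by have := congr1 (fun f : {ffun U0 -> bool} => f (FSetSub zU)) ep; rewrite !ffunE.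
have bad_sub : (phi @` bad `<=` [fset g in Cset _ sig H])%fset.
  apply/fsubsetP => g /imfsetP [S SB ->]; rewrite inE /Cset inE.
  apply/forallP => h; apply/implyP => hH; rewrite !ffunE.
  apply/negP => /andP [h1 h2].
  move: SB; rewrite /bad in_sepfset => /andP [_ /negP]; apply.
  apply/existsP; exists (FSetSub h1); apply/existsP; exists (FSetSub h2) => /=.
  by rewrite sigE ?hinH // addrC subrK.
have card_bad : (#|` bad| <= #|Cset _ sig H|)%N.
  have e : #|` (phi @` bad)%fset| = #|` bad|.
    rewrite card_in_imfset //; move=> x y xb yb; apply: phi_inj; exact: badgood.
  rewrite -e; apply: leq_trans (fsubset_leq_card bad_sub) _.
  by rewrite card_finset.
have UB : forall u : U0, val u \notin B.
  by move=> u; have := valP u; rewrite in_fsetD => /andP [].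
have UL : forall u : U0, val u \in LnP.
  by move=> u; have := valP u; rewrite in_fsetD => /andP [].
pose psi (g : {ffun U0 -> bool}) : {fset 'rV[int]_D} :=
  (F `|` [fset val u | u in [set u : U0 | g u]])%fset.
have inpsi : forall g (u : U0), (val u \in psi g) = g u.
  move=> g u; rewrite in_fsetU mem_imfset; last exact: val_inj.
  rewrite inE; case: (boolP (val u \in F)) => // uF.
  by move: (UB u); rewrite (fsubsetP hF _ uF).
have psi_inj : injective psi.
  by move=> g1 g2 e; apply/ffunP => u; rewrite -!inpsi e.
have psi_good : forall g, psi g \in good.
  move=> g; rewrite /good in_sepfset fpowersetE; apply/andP; split.
    apply/fsubsetP => z; rewrite in_fsetU => /orP [zF|].
      exact: (fsubsetP BL _ (fsubsetP hF _ zF)).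
    by case/imfsetP => u _ ->.
  apply/eqP/fsetP => z; rewrite in_fsetI in_fsetU.
  case: (boolP (z \in F)) => zF /=; first by rewrite (fsubsetP hF _ zF).
  apply/negbTE/negP => /andP [/imfsetP [u _ zu] zB].
  by move: (UB u) zB; rewrite zu => /negP h zB; apply: h.
have card_good : (2 ^ #|{: U0}| <= #|` good|)%N.
  pose A := [fset x in [set: {ffun U0 -> bool}]]%fset.
  have e : #|` (psi @` A)%fset| = #|` A| by rewrite card_in_imfset //; move=> x y _ _; exact: psi_inj.
  have : #|` A| = (2 ^ #|{: U0}|)%N by rewrite card_finset cardsT card_ffun card_bool.
  move=> <-; rewrite -e; apply: fsubset_leq_card; apply/fsubsetP => S /imfsetP [g _ ->].
  exact: psi_good.
have Qk : forall z, z \in Q -> (z \in LnP) /\ (k - z \in LnP).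
  move=> z; rewrite /Q in_sepfset => /andP [zL /asboolP [x xin ex]]; split => //.
  by apply/hL; rewrite zrB -ex opprB addrC subrK.
pose valH := [fset val h | h in H]%fset.
pose negf := fun z : 'rV[int]_D => k - z.
pose Fix := [fset z in Q | (z + z)%R == k]%fset.
have cover : (Q `<=` valH `|` negf @` valH `|` B `|` negf @` B `|` Fix)%fset.
  apply/fsubsetP => z zQ; have [zL kzL] := Qk z zQ.
  rewrite !in_fsetU.
  case: (boolP (z \in B)) => zB; first by rewrite ?orbT ?orTb.
  case: (boolP (k - z \in B)) => kzB.
    have -> : z \in (negf @` B)%fset.
      by apply/imfsetP; exists (k - z) => //; rewrite /negf kk.
    by rewrite ?orbT ?orTb.
  have zU : z \in U0 by rewrite in_fsetD zB zL.
  have kzU : k - z \in U0 by rewrite in_fsetD kzB kzL.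
  case: (eqVneq z (k - z)) => [e|ne].
    have -> : z \in Fix by rewrite /Fix in_sepfset zQ {1}e subrK eqxx.
    by rewrite ?orbT ?orTb.
  case: (ltngtP (choice.pickle z) (choice.pickle (k - z))) => [lt|gt|eq].
  - have -> : z \in valH.
      apply/imfsetP; exists (FSetSub zU) => //.
      by rewrite inE /= kzU ne lt.
    by rewrite ?orbT ?orTb.
  - have -> : z \in (negf @` valH)%fset.
      apply/imfsetP; exists (k - z); last by rewrite /negf kk.
      apply/imfsetP; exists (FSetSub kzU) => //.
      rewrite inE /= kk zU gt andbT; apply/negP => /eqP e; move: ne; by rewrite e eqxx.
    by rewrite ?orbT ?orTb.
  - by move: ne; rewrite {1}(pcan_inj choice.pickleK eq) eqxx.
have cfix : (#|` Fix| <= 1)%N.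
  apply: fix_card => x y; rewrite /Fix !in_sepfset => /andP [_ /eqP ex] /andP [_ /eqP ey].
  apply/matrixP => i j; rewrite [i]ord1; have := congr1 (fun M : 'rV[int]_D => M ord0 j) (etrans ex (esym ey)).
  rewrite /= !mxE => h; move: h; move: (x ord0 j) (y ord0 j) => a b h; lia.
have cneg : forall X, (#|` (negf @` X)%fset| <= #|` X|)%N.
  by move=> X; apply: leq_trans (leq_imfset_card _ _ _) _.
have cvalH : (#|` valH| <= #|H|)%N.
  by apply: leq_trans (leq_imfset_card _ _ _) _; rewrite cardE.
have hN : (#|` Q| <= 2 * #|H| + 2 * K + 1)%N.
  apply: leq_trans (fsubset_leq_card cover) _.
  have u1 := (leq_card_fsetU (valH `|` negf @` valH `|` B `|` negf @` B)%fset Fix).1.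
  have u2 := (leq_card_fsetU (valH `|` negf @` valH `|` B)%fset (negf @` B)%fset).1.
  have u3 := (leq_card_fsetU (valH `|` negf @` valH)%fset B).1.
  have u4 := (leq_card_fsetU valH (negf @` valH)%fset).1.
  have n1 := cneg valH. have n2 := cneg B.
  apply: (leq_trans u1); apply: leq_trans (leq_add (leq_trans u2 (leq_add (leq_trans u3 (leq_add (leq_trans u4 (leq_add (leqnn _) n1)) (leqnn _))) n2)) cfix) _.
  clear -cvalH hB. lia.
have hb : (#|` bad| * 4 ^ #|H| <= 3 ^ #|H| * 2 ^ #|{: U0}|)%N.
  exact: leq_trans (leq_mul card_bad (leqnn _)) count.
move: hb card_good hN.
move: #|` bad| #|` good| #|` Q| #|H| #|{: U0}| => b g q h u hb hg hq.
clear -R K hb hg hq.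
have g0 : (0 < g)%N by apply: leq_trans hg; rewrite expn_gt0.
have gR : (0 : R) < g%:R by rewrite ltr0n.
have e34a : (0 : R) < 3/4 by lra.
have e34b : (3/4 : R) <= 1 by lra.
have e34 : (0 : R) < (3/4 : R) <= 1 by rewrite e34a e34b.
have step1 : (3/4 : R) `^ ((h + K.+1)%N%:R) <= (3/4) `^ (q%:R / 2).
  apply: (ger_powR e34).
  have : (q%:R : R) <= (2 * h + 2 * K + 1)%N%:R by rewrite ler_nat.
  rewrite !natrD ?natrM ?natrS; lra.
rewrite powR_mulrn in step1; last lra.
apply: (@le_trans _ _ ((4/3)^+K.+1 * (3/4)^+(h + K.+1))); last first.
  by rewrite ler_pM2l // exprn_gt0 //; lra.
have -> : (4/3 : R)^+K.+1 * (3/4)^+(h + K.+1) = (3/4)^+h.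
  by rewrite exprD mulrCA -exprMn (_ : 4/3 * (3/4) = 1 :> R) ?expr1n ?mulr1 //; field.
rewrite ler_pdivrMr // expr_div_n.
have hbR : (b%:R * 4%:R ^+ h : R) <= 3%:R ^+ h * 2%:R ^+ u.
  by rewrite -!natrX -!natrM ler_nat.
have hgR : (2%:R ^+ u : R) <= g%:R by rewrite -natrX ler_nat.
have p4 : (0 : R) < 4 ^+ h by rewrite exprn_gt0.
rewrite mulrAC ler_pdivlMr //.
apply: le_trans hbR _.
by rewrite ler_pM2l // exprn_gt0.
Qed.
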